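(* Let $K$ be an algebraically closed field of characteristic $p>0$, $p\neq 2$, and $n\geq 4$. Let $\Phi$ be a group automorphism of $\mathrm{Aut}_0 K[x_1,\ldots,x_n]$ which fixes every element of $\mathrm{GL}_n(K)$ and fixes the automorphism $\psi: x_1\mapsto x_1+x_2x_3$, $x_k\mapsto x_k$ ($k\neq 1$). Let $M\in K[x_3,\ldots,x_n]$ be a monomial (a scalar multiple of a product of powers of $x_3,\ldots,x_n$) of positive total degree, and let $\varphi$ be the automorphism $x_1\mapsto x_1+M(x_3,\ldots,x_n)$, $x_k\mapsto x_k$ for $k=2,\ldots,n$. Then $\Phi(\varphi)=\varphi$.
   Context: $\mathrm{Aut}_0 K[x_1,\ldots,x_n]$ is the group under composition of $K$-algebra automorphisms of $K[x_1,\ldots,x_n]$ preserving the origin (each $\varphi(x_i)$ has zero constant term); $\mathrm{GL}_n(K)$ is its subgroup of linear automorphisms $x_i\mapsto\sum_j a_{ij}x_j$ with invertible matrix $(a_{ij})$. *)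

(* Defs.v *)
From HB Require Import structures.
From mathcomp Require Import all_boot all_order all_algebra.
From mathcomp Require Import mpoly.
Set Implicit Arguments. Unset Strict Implicit. Unset Printing Implicit Defensive.
Import GRing.Theory.
Local Open Scope ring_scope.

(* A K-algebra endomorphism of K[x_1..x_n] is determined by the images of the
   variables: e i = image of x_(i+1) (0-indexed variables 'X_i, i : 'I_n). *)
Definition endo (K : fieldType) (n : nat) := n.-tuple {mpoly K[n]}.

Definition endo_apply (K : fieldType) n (e : endo K n) (p : {mpoly K[n]}) :
  {mpoly K[n]} := p \mPo e.

Definition endo_comp (K : fieldType) n (f g : endo K n) : endo K n :=
  [tuple endo_apply f (tnth g i) | i < n].

Definition endo_id (K : fieldType) n : endo K n := [tuple 'X_i | i < n].

Definition is_aut (K : fieldType) n (f : endo K n) : Prop :=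
  exists g : endo K n, endo_comp f g = endo_id K n /\ endo_comp g f = endo_id K n.

Definition origin_preserving (K : fieldType) n (f : endo K n) : Prop :=
  forall i : 'I_n, (tnth f i)@_0 = 0.

Definition is_aut0 (K : fieldType) n (f : endo K n) : Prop :=
  is_aut f /\ origin_preserving f.

Definition linear_endo (K : fieldType) n (A : 'M[K]_n) : endo K n :=
  [tuple \sum_(j < n) A i j *: 'X_j | i < n].

(* A variable indexed by a natural number (0-indexed: var k = x_(k+1));
   equal to 0 if k >= n (never used in that case). *)
Definition var (K : fieldType) n (k : nat) : {mpoly K[n]} :=
  if insub k is Some i then 'X_i else 0.

Definition elem1 (K : fieldType) n (P : {mpoly K[n]}) : endo K n :=
  [tuple (if val i == 0%N then 'X_i + P else 'X_i) | i < n].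

Definition psi (K : fieldType) n : endo K n := elem1 (var K n 1 * var K n 2).

(* Phi is a group automorphism of Aut_0 (given as a map on endo that maps
   Aut_0 bijectively onto Aut_0 and is multiplicative there). *)
Definition group_aut_Aut0 (K : fieldType) n (Phi : endo K n -> endo K n) : Prop :=
  [/\ (forall f, is_aut0 f -> is_aut0 (Phi f)),
      (forall f g, is_aut0 f -> is_aut0 g -> Phi f = Phi g -> f = g),
      (forall h, is_aut0 h -> exists2 f, is_aut0 f & Phi f = h) &
      (forall f g, is_aut0 f -> is_aut0 g ->
         Phi (endo_comp f g) = endo_comp (Phi f) (Phi g))].

(* Main.v *)
Require Import Defs.
From HB Require Import structures.
From mathcomp Require Import all_boot all_order all_algebra.
From mathcomp Require Import mpoly perm fingroup.
Set Implicit Arguments. Unset Strict Implicit. Unset Printing Implicit Defensive.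
Import GRing.Theory.
Local Open Scope ring_scope.
Section Gen.
Variable K : fieldType.
Variable n : nat.

Definition elemj (j : nat) (P : {mpoly K[n]}) : endo K n :=
  [tuple (if val i == j then 'X_i + P else 'X_i) | i < n].

Lemma tnth_elemj j P i : tnth (elemj j P) i = if val i == j then 'X_i + P else 'X_i.
Proof. by rewrite tnth_mktuple. Qed.

Lemma tnth_comp (f g : endo K n) i : tnth (endo_comp f g) i = tnth g i \mPo f.
Proof. by rewrite tnth_mktuple. Qed.

Lemma compX i (t : endo K n) : 'X_i \mPo t = tnth t i.
Proof. by rewrite comp_mpolyXU -tnth_nth. Qed.

Lemma comp_mpolyA (p : {mpoly K[n]}) (g f : endo K n) :
  (p \mPo g) \mPo f = p \mPo [tuple (tnth g i \mPo f) | i < n].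
Proof.
rewrite (comp_mpolyEX p g) (comp_mpolyEX p) raddf_sum /=.
apply: eq_bigr => m _; rewrite comp_mpolyZ !comp_mpolyX rmorph_prod /=.
congr (_ *: _); apply: eq_bigr => i _; by rewrite rmorphXn tnth_mktuple.
Qed.

Lemma endo_compA (f g h : endo K n) :
  endo_comp (endo_comp f g) h = endo_comp f (endo_comp g h).
Proof.
apply: eq_from_tnth => i; rewrite !tnth_comp comp_mpolyA; congr (_ \mPo _).
Qed.

Lemma endo_comp1 (f : endo K n) : endo_comp f (endo_id K n) = f.
Proof. by apply: eq_from_tnth => i; rewrite tnth_comp tnth_mktuple compX. Qed.

Lemma endo_1comp (f : endo K n) : endo_comp (endo_id K n) f = f.
Proof. by apply: eq_from_tnth => i; rewrite tnth_comp; exact: comp_mpoly_id. Qed.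

Lemma comp_mpoly_coef0 (p : {mpoly K[n]}) (f : endo K n) :
  p@_0 = 0 -> (forall i, (tnth f i)@_0 = 0) -> (p \mPo f)@_0 = 0.
Proof.
move=> hp hf; rewrite comp_mpolyEX raddf_sum /= big1 // => m _.
rewrite mcoeffZ comp_mpolyX rmorph_prod /=.
have [->|hm] := eqVneq m 0%MM; first by rewrite hp mul0r.
have [i hi] : exists i, m i != 0%N.
  case: (pickP (fun i => m i != 0%N)) => [i hi|h0]; first by exists i.
  by move: hm; case/negP; apply/eqP/mnmP => i; rewrite mnm0E; move: (h0 i) => /= /negbFE /eqP.
rewrite (bigD1 i) //= rmorphXn.
have -> : forall q : {mpoly K[n]}, mpoly_mcoeff__canonical__GRing_RMorphism n K q = q@_0 by [].
by rewrite hf expr0n (negbTE hi) mul0r mulr0.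
Qed.

Lemma aut0_comp (f g : endo K n) : is_aut0 f -> is_aut0 g -> is_aut0 (endo_comp f g).
Proof.
move=> [[f' [hf1 hf2]] hf0] [[g' [hg1 hg2]] hg0]; split.
  exists (endo_comp g' f'); split.
    by rewrite endo_compA -(endo_compA g) hg1 endo_1comp.
  by rewrite endo_compA -(endo_compA f') hf2 endo_1comp.
by move=> i; rewrite tnth_comp; apply: comp_mpoly_coef0.
Qed.

Lemma Xm_fix (m : 'X_{1..n}) (t : endo K n) :
  (forall i, m i != 0%N -> tnth t i = 'X_i) -> 'X_[m] \mPo t = 'X_[m].
Proof.
move=> h; rewrite comp_mpolyX [RHS]mpolyXE_id; apply: eq_bigr => i _.
by have [->|/h ->] := eqVneq (m i) 0%N; rewrite ?expr0.
Qed.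

Lemma cXm_fix c (m : 'X_{1..n}) (t : endo K n) :
  (forall i, m i != 0%N -> tnth t i = 'X_i) -> (c *: 'X_[m]) \mPo t = c *: 'X_[m].
Proof. by move=> h; rewrite comp_mpolyZ Xm_fix. Qed.

Lemma elemj_fix_cond j (b : 'X_{1..n}) Q :
  (forall i : 'I_n, val i = j -> b i = 0%N) ->
  forall i, b i != 0%N -> tnth (elemj j Q) i = 'X_i.
Proof.
move=> hb i hi; rewrite tnth_elemj; case: eqP => // /hb hbi.
by rewrite hbi in hi.
Qed.

Lemma elemj_compC j c d (b : 'X_{1..n}) :
  (forall i : 'I_n, val i = j -> b i = 0%N) ->
  endo_comp (elemj j (c *: 'X_[b])) (elemj j (d *: 'X_[b])) = elemj j ((c + d) *: 'X_[b]).
Proof.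
move=> hb; apply/eq_from_tnth => i; rewrite tnth_comp !tnth_elemj.
case: ifP => hi.
  rewrite comp_mpolyD compX tnth_elemj hi cXm_fix; last exact: elemj_fix_cond.
  by rewrite scalerDl addrA.
by rewrite compX tnth_elemj hi.
Qed.

Lemma elemj_0 j (b : 'X_{1..n}) : elemj j (0 *: 'X_[b]) = endo_id K n.
Proof.
apply/eq_from_tnth => i; rewrite tnth_elemj tnth_mktuple scale0r addr0.
by case: ifP.
Qed.

Lemma aut0_elemj j c (b : 'X_{1..n}) :
  (forall i : 'I_n, val i = j -> b i = 0%N) -> b != 0%MM ->
  is_aut0 (elemj j (c *: 'X_[b])).
Proof.
move=> hb hb0; split.
  exists (elemj j (- c *: 'X_[b])); rewrite !elemj_compC // addrN addNr elemj_0.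
  by split.
move=> i; rewrite tnth_elemj.
have h0 : forall k : 'I_n, ('X_k : {mpoly K[n]})@_0 = 0.
  by move=> k; rewrite mcoeffX mnm1_eq0.
case: ifP => _; rewrite ?mcoeffD ?mcoeffZ !mcoeffX ?mnm1_eq0 ?add0r //.
by rewrite (negbTE hb0) mulr0.
Qed.

End Gen.
Section Lin.
Variable K : fieldType.
Variable n : nat.

Lemma linear_perm (s : {perm 'I_n}) :
  linear_endo (perm_mx s : 'M[K]_n) = [tuple 'X_(s i) | i < n].
Proof.
apply: eq_from_tnth => i; rewrite !tnth_mktuple (bigD1 (s i)) //= big1.
  by rewrite !mxE eqxx scale1r addr0.
by move=> l hl; rewrite !mxE eq_sym (negbTE hl) scale0r.
Qed.

Lemma linear_elemj (j k : 'I_n) c : j != k ->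
  elemj (val j) (c *: 'X_k) = linear_endo (1%:M + c *: delta_mx j k : 'M[K]_n).
Proof.
move=> hjk; apply: eq_from_tnth => i; rewrite !tnth_mktuple.
have [hij|hij] := eqVneq i j.
  subst i; rewrite eqxx (bigD1 j) //= (bigD1 k) 1?eq_sym //= big1.
    by rewrite !mxE !eqxx (negbTE hjk) /= mulr0 mulr1 addr0 add0r scale1r addr0.
  move=> l /andP [hl1 hl2]; by rewrite !mxE eq_sym (negbTE hl1) (negbTE hl2) andbF mulr0 addr0 scale0r.
have -> : (val i == val j) = false by apply/negbTE; move: hij; apply: contra => /eqP h; apply/eqP/val_inj.
rewrite (bigD1 i) //= big1.
  by rewrite !mxE eqxx (negbTE hij) /= mulr0 !addr0 scale1r.
move=> l hl; by rewrite !mxE eq_sym (negbTE hl) (negbTE hij) /= mulr0 addr0 scale0r.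
Qed.

Lemma unit_elem_mx (j k : 'I_n) c : j != k -> (1%:M + c *: delta_mx j k : 'M[K]_n) \in unitmx.
Proof.
move=> hjk.
have h : (1%:M + c *: delta_mx j k) *m (1%:M - c *: delta_mx j k) = 1%:M :> 'M[K]_n.
  rewrite mulmxDl !mulmxBr !mul1mx !mulmx1 -scalemxAl -scalemxAr.
  rewrite mul_delta_mx_cond eq_sym (negbTE hjk) mulr0n !scaler0 subr0.
  by rewrite subrK.
by case: (mulmx1_unit h).
Qed.

End Lin.
Section P.
Variables (K : fieldType) (n : nat) (Phi : endo K n -> endo K n).
Hypothesis hn : (4 <= n)%N.
Hypothesis hPhi : group_aut_Aut0 Phi.
Hypothesis hGL : forall A : 'M[K]_n, A \in unitmx -> Phi (linear_endo A) = linear_endo A.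
Hypothesis hpsi : Phi (psi K n) = psi K n.

Lemma tnth_elemjO (k : 'I_n) (P : {mpoly K[n]}) i :
  tnth (elemj (val k) P) i = if i == k then 'X_i + P else 'X_i.
Proof. by rewrite tnth_elemj. Qed.

Lemma condO (k : 'I_n) (b : 'X_{1..n}) : b k = 0%N -> forall i : 'I_n, val i = val k -> b i = 0%N.
Proof. by move=> h i /val_inj ->. Qed.

Lemma fix_comp a b : is_aut0 a -> is_aut0 b -> Phi a = a -> Phi b = b ->
  Phi (endo_comp a b) = endo_comp a b.
Proof. by case: hPhi => _ _ _ h4 ha hb fa fb; rewrite h4 // fa fb. Qed.

Lemma fix_cancel E X : is_aut0 E -> is_aut0 X -> Phi X = X ->
  Phi (endo_comp E X) = endo_comp E X -> Phi E = E.
Proof.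
case: hPhi => _ _ _ h4 hE hX fX; rewrite h4 // fX => h.
case: hX => [[Y [hY1 _]] _].
by rewrite -(endo_comp1 (Phi E)) -hY1 -endo_compA h endo_compA hY1 endo_comp1.
Qed.

Lemma fix_commut s t E : is_aut0 s -> is_aut0 t -> is_aut0 E ->
  Phi s = s -> Phi t = t -> endo_comp s t = endo_comp E (endo_comp t s) -> Phi E = E.
Proof.
move=> hs ht hE fs ft h.
apply: (fix_cancel hE (aut0_comp ht hs) (fix_comp ht hs ft fs)).
by rewrite -h; apply: fix_comp.
Qed.

Lemma fix_lin (j k : 'I_n) c : j != k ->
  Phi (elemj (val j) (c *: 'X_k)) = elemj (val j) (c *: 'X_k).
Proof. by move=> h; rewrite linear_elemj // hGL // unit_elem_mx. Qed.

Lemma comm_lemma (j : 'I_n) (i0 : 'I_n) (hi0 : val i0 = 0%N) (hj : j != i0) c (b r : 'X_{1..n}) :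
  b i0 = 0%N -> b j = 0%N -> b != 0%MM -> r i0 = 0%N -> r j = 0%N ->
  Phi (elemj (val j) (c *: 'X_[b])) = elemj (val j) (c *: 'X_[b]) ->
  Phi (elemj 0 (1 *: 'X_[(U_(j) + r)%MM])) = elemj 0 (1 *: 'X_[(U_(j) + r)%MM]) ->
  Phi (elemj 0 (c *: 'X_[(b + r)%MM])) = elemj 0 (c *: 'X_[(b + r)%MM]).
Proof.
move=> hb0 hbj hb hr0 hrj fs ft.
rewrite -hi0 in ft *.
have hUr : (U_(j) + r)%MM != 0%MM.
  apply/negP => /eqP/mnmP/(_ j); by rewrite mnmDE mnm1E eqxx mnm0E.
have hbr : (b + r)%MM != 0%MM.
  move: hb; apply: contra => /eqP/mnmP h; apply/eqP/mnmP => i.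
  by move: (h i); rewrite mnmDE mnm0E => /eqP; rewrite addn_eq0 => /andP [/eqP -> _].
apply: (fix_commut (aut0_elemj c (condO hbj) hb) _ _ fs ft).
- apply: aut0_elemj => //; apply: condO; by rewrite mnmDE mnm1E hr0 (negbTE hj).
- apply: aut0_elemj => //; apply: condO; by rewrite mnmDE hb0 hr0.
set s := elemj _ _; set t := elemj _ _; set E := elemj _ _.
have fixr : forall (u : endo K n), (forall i, r i != 0%N -> tnth u i = 'X_i) -> 'X_[r] \mPo u = 'X_[r].
  exact: Xm_fix.
have hrs : 'X_[r] \mPo s = 'X_[r] by apply: Xm_fix; apply: elemj_fix_cond; apply: condO.
have hrE : 'X_[r] \mPo E = 'X_[r] by apply: Xm_fix; apply: elemj_fix_cond; apply: condO.
have hbt : (c *: 'X_[b]) \mPo t = c *: 'X_[b] by apply: cXm_fix; apply: elemj_fix_cond; apply: condO.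
have hbE : (c *: 'X_[b]) \mPo E = c *: 'X_[b] by apply: cXm_fix; apply: elemj_fix_cond; apply: condO.
apply/eq_from_tnth => i; rewrite !tnth_comp !tnth_elemjO.
have [->|hii0] := eqVneq i i0.
  rewrite eq_sym (negbTE hj) !compX !tnth_elemjO eqxx !comp_mpolyD !scale1r !mpolyXD.
  rewrite !rmorphM /= !compX !tnth_elemjO eqxx (negbTE hj) hrs hrE /=.
  by rewrite eq_sym (negbTE hj) eqxx mpolyXD scalerAl mulrDl [_ * _ + _]addrC addrA.
have [->|hij] := eqVneq i j.
  rewrite !compX !tnth_elemjO eqxx comp_mpolyD hbt comp_mpolyD hbE compX /t tnth_elemjO (negbTE hj).
  by rewrite compX /E tnth_elemjO (negbTE hj).
rewrite !compX /s /t /E !tnth_elemjO (negbTE hij) (negbTE hii0) compX tnth_elemjO.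
by rewrite (negbTE hii0).
Qed.


Lemma swap_lemma (i0 i1 : 'I_n) (h0 : val i0 = 0%N) (h1 : val i1 = 1%N) c (b : 'X_{1..n}) :
  b i0 = 0%N -> b i1 = 0%N -> b != 0%MM ->
  Phi (elemj 0 (c *: 'X_[b])) = elemj 0 (c *: 'X_[b]) ->
  Phi (elemj 1 (c *: 'X_[b])) = elemj 1 (c *: 'X_[b]).
Proof.
move=> hb0 hb1 hb fZ; rewrite -h0 in fZ; rewrite -h1.
have hi01 : i0 != i1 by apply/negP => /eqP/(congr1 val); rewrite h0 h1.
pose T := linear_endo (perm_mx (tperm i0 i1) : 'M[K]_n).
have hT : T = [tuple 'X_(tperm i0 i1 i) | i < n] := linear_perm K (tperm i0 i1).
have fT : Phi T = T := hGL (unitmx_perm K (tperm i0 i1)).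
have aT : is_aut0 T.
  split; last by move=> i; rewrite hT tnth_mktuple mcoeffX mnm1_eq0.
  by exists T; rewrite hT; split; apply/eq_from_tnth => i;
    rewrite tnth_comp !tnth_mktuple compX tnth_mktuple tpermK.
have aZ : is_aut0 (elemj (val i0) (c *: 'X_[b])) by apply: aut0_elemj => //; apply: condO.
have -> : elemj (val i1) (c *: 'X_[b]) =
    endo_comp T (endo_comp (elemj (val i0) (c *: 'X_[b])) T).
  apply/eq_from_tnth => i; rewrite !tnth_comp hT tnth_mktuple compX tnth_elemjO.
  have [->|hi1] := eqVneq i i1.
    rewrite tpermR tnth_elemjO eqxx comp_mpolyD compX tnth_mktuple tpermL cXm_fix //.
    move=> l hl; rewrite tnth_mktuple tpermD //.
      by apply: contra hl => /eqP <-; rewrite hb0.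
    by apply: contra hl => /eqP <-; rewrite hb1.
  rewrite tnth_elemjO.
  have -> : (tperm i0 i1 i == i0) = false.
    apply/negbTE; apply: contra hi1 => /eqP h.
    by rewrite -(inj_eq (@perm_inj _ (tperm i0 i1))) h tpermR.
  by rewrite compX tnth_mktuple tpermK.
apply: fix_comp => //; first exact: aut0_comp.
exact: fix_comp.
Qed.


Lemma var_eq (i : 'I_n) : var K n (val i) = 'X_i.
Proof.
rewrite /var; case: insubP => [u _ hu|]; last by rewrite ltn_ord.
by move/val_inj: hu => ->.
Qed.

Lemma neqO (i j : 'I_n) : val i != val j -> i != j.
Proof. by apply: contra => /eqP ->. Qed.

Lemma tau_fix (i0 i1 i2 k : 'I_n) (h0 : val i0 = 0%N) (h1 : val i1 = 1%N) (h2 : val i2 = 2%N)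
  (hk : (2 <= val k)%N) :
  Phi (elemj 0 (1 *: 'X_[(U_(i1) + U_(k))%MM])) = elemj 0 (1 *: 'X_[(U_(i1) + U_(k))%MM]).
Proof.
have hpsi' : Phi (elemj 0 (1 *: 'X_[(U_(i1) + U_(i2))%MM])) = elemj 0 (1 *: 'X_[(U_(i1) + U_(i2))%MM]).
  have e : elemj 0 (1 *: 'X_[(U_(i1) + U_(i2))%MM]) = psi K n.
    by rewrite /psi -h2 -h1 !var_eq scale1r mpolyXD.
  by rewrite e.
have [->|hk2] := eqVneq k i2; first exact: hpsi'.
have hk0 : k != i0 by apply: neqO; rewrite h0 -lt0n (leq_trans _ hk).
have hk1 : k != i1 by apply: neqO; rewrite h1; apply: contraTneq hk => ->.
have h20 : i2 != i0 by apply: neqO; rewrite h0 h2.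
have h21 : i1 != i2 by apply: neqO; rewrite h1 h2.
have h10 : i1 != i0 by apply: neqO; rewrite h0 h1.
rewrite addmC.
apply: (@comm_lemma i2 i0 h0 h20 1 U_(k) U_(i1)).
- by rewrite mnm1E (negbTE hk0).
- by rewrite mnm1E (negbTE hk2).
- by rewrite mnm1_eq0.
- by rewrite mnm1E (negbTE h10).
- by rewrite mnm1E (negbTE h21).
- by apply: fix_lin; rewrite eq_sym.
- by rewrite -h0 addmC; rewrite h0.
Qed.

Lemma main_ind (i0 i1 i2 : 'I_n) (h0 : val i0 = 0%N) (h1 : val i1 = 1%N) (h2 : val i2 = 2%N) d :
  forall c (m : 'X_{1..n}), mdeg m = d.+1 -> m i0 = 0%N -> m i1 = 0%N ->
  Phi (elemj 0 (c *: 'X_[m])) = elemj 0 (c *: 'X_[m]).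
Proof.
have h10 : i1 != i0 by apply: neqO; rewrite h0 h1.
elim: d => [|d IH] c m hd hm0 hm1.
  have /mdeg1P [k /eqP hk] : mdeg m == 1%N by rewrite hd.
  subst m.
  have hk0 : i0 != k by apply/negP => /eqP e; move: hm0; rewrite e mnm1E eqxx.
  rewrite -h0; exact: fix_lin.
have [k hk] : exists k, m k != 0%N.
  case: (pickP (fun i => m i != 0%N)) => [i hi|hz]; first by exists i.
  have : m = 0%MM by apply/mnmP => i; rewrite mnm0E; move: (hz i) => /= /negbFE /eqP.
  by move=> e; move: hd; rewrite e mdeg0.
set m' := (m - U_(k))%MM.
have hm : m = (m' + U_(k))%MM.
  apply/mnmP => l; rewrite mnmDE mnmBE mnm1E.
  by case: eqP => [<-|_]; [rewrite subnK // lt0n | rewrite subn0 addn0].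
have hd' : mdeg m' = d.+1 by move: hd; rewrite hm mdegD mdeg1 addn1 => [[]].
have hm'0 : m' i0 = 0%N by rewrite mnmBE hm0.
have hm'1 : m' i1 = 0%N by rewrite mnmBE hm1.
have hm'nz : m' != 0%MM by rewrite -mdeg_eq0 hd'.
have hk0 : k != i0 by apply: contra hk => /eqP ->; rewrite hm0.
have hk1 : k != i1 by apply: contra hk => /eqP ->; rewrite hm1.
have hk2 : (2 <= val k)%N.
  move: hk0 hk1; rewrite -!(inj_eq val_inj) h0 h1.
  by case: (val k) => [|[|]].
rewrite hm; apply: (@comm_lemma i1 i0 h0 h10 c m' U_(k)) => //.
- by rewrite mnm1E (negbTE hk0).
- by rewrite mnm1E (negbTE hk1).
- rewrite h1; apply: (swap_lemma h0 h1) => //.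
  exact: IH.
- exact: (tau_fix h0 h1 h2).
Qed.

End P.

Theorem mainTheorem5 (K : closedFieldType) (p : nat) (n : nat)
  (hp : p \in [pchar K]) (hp2 : p != 2%N) (hn : (4 <= n)%N)
  (Phi : endo K n -> endo K n)
  (hPhi : group_aut_Aut0 Phi)
  (hGL : forall A : 'M[K]_n, A \in unitmx -> Phi (linear_endo A) = linear_endo A)
  (hpsi : Phi (psi K n) = psi K n)
  (c : K) (m : 'X_{1..n})
  (hc : c != 0)
  (hm01 : forall i : 'I_n, (val i < 2)%N -> m i = 0%N)
  (hdeg : (0 < mdeg m)%N) :
  Phi (elem1 (c *: 'X_[m])) = elem1 (c *: 'X_[m]).
Proof.
have o0 : (0 < n)%N := leq_trans (isT : (1 <= 4)%N) hn.
have o1 : (1 < n)%N := leq_trans (isT : (2 <= 4)%N) hn.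
have o2 : (2 < n)%N := leq_trans (isT : (3 <= 4)%N) hn.
pose i0 := Ordinal o0; pose i1 := Ordinal o1; pose i2 := Ordinal o2.
have hm0 : m i0 = 0%N by apply: hm01.
have hm1 : m i1 = 0%N by apply: hm01.
have h := (@main_ind K n Phi hPhi hGL hpsi i0 i1 i2 erefl erefl erefl (mdeg m).-1 c m (esym (prednK hdeg)) hm0 hm1).
rewrite /elem1; exact h.
Qed.
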